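(* Let $A$ be an infinitesimal Hopf algebra with counit $\varepsilon$ and antipode $S$. Then: (1) For all $a,b\in A$, $S(ab)=\varepsilon(a)S(b)+\varepsilon(b)S(a)-\varepsilon(a)\varepsilon(b)1$. In particular $S(ab)=0$ whenever $\varepsilon(a)=\varepsilon(b)=0$. (2) For all $a\in A$, $\Delta(S(a))=S(a)\otimes 1+1\otimes S(a)-\varepsilon(a)1\otimes 1$. In particular, if $\varepsilon(a)=0$ then $S(a)$ is primitive, i.e. $\Delta(S(a))=S(a)\otimes 1+1\otimes S(a)$.
   Context: An infinitesimal bialgebra over a field $K$ is a $K$-vector space $A$ that is an associative unital algebra (product $m$, unit $1$) and a coassociative counital coalgebra (coproduct $\Delta$, counit $\varepsilon$) such that for all $a,b\in A$: $\Delta(ab)=\Delta(a)(1\otimes b)+(a\otimes 1)\Delta(b)-a\otimes b$. On the space $\mathcal{L}(A)$ of linear endomorphisms of $A$, the convolution product is $f\star g=m\circ(f\otimes g)\circ\Delta$, with unit $\nu\circ\varepsilon$, where $\nu(\lambda)=\lambda 1$. $A$ is an infinitesimal Hopf algebra if $\mathrm{Id}_A$ has an inverse $S$ for $\star$; $S$ is called the antipode. *)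

(* Defs.v *)
From HB Require Import structures.
From mathcomp Require Import all_boot all_order all_algebra.
Set Implicit Arguments. Unset Strict Implicit. Unset Printing Implicit Defensive.
Import GRing.Theory.
Local Open Scope ring_scope.

(* Elements of A (x) A (resp. A (x) A (x) A) are represented by finite formal
   sums of pure tensors, i.e. lists of pairs (resp. triples).  Two such formal
   sums denote the same tensor iff they agree under every bilinear
   (resp. trilinear) map into every K-vector space (universal property of the
   tensor product). *)

Section Tensors.
Variables (K : fieldType) (A : lmodType K).

Definition bilin (V : lmodType K) (B : A -> A -> V) : Prop :=
  (forall c x y z, B (c *: x + y) z = c *: B x z + B y z) /\
  (forall c x y z, B z (c *: x + y) = c *: B z x + B z y).

Definition trilin (V : lmodType K) (B : A -> A -> A -> V) : Prop :=
  (forall c x y z w, B (c *: x + y) z w = c *: B x z w + B y z w) /\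
  (forall c x y z w, B z (c *: x + y) w = c *: B z x w + B z y w) /\
  (forall c x y z w, B z w (c *: x + y) = c *: B z w x + B z w y).

Definition teq2 (s t : seq (A * A)) : Prop :=
  forall (V : lmodType K) (B : A -> A -> V), bilin B ->
    \sum_(p <- s) B p.1 p.2 = \sum_(p <- t) B p.1 p.2.

Definition teq3 (s t : seq (A * A * A)) : Prop :=
  forall (V : lmodType K) (B : A -> A -> A -> V), trilin B ->
    \sum_(p <- s) B p.1.1 p.1.2 p.2 = \sum_(p <- t) B p.1.1 p.1.2 p.2.

End Tensors.

Section InfHopf.
Variables (K : fieldType) (A : algType K).
Variable (Delta : A -> seq (A * A)) (eps : {scalar A}).

Definition coprod_linear : Prop :=
  forall (c : K) (x y : A),
    teq2 (Delta (c *: x + y)) ([seq (c *: p.1, p.2) | p <- Delta x] ++ Delta y).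

Definition coassociative : Prop :=
  forall a : A,
    teq3 (flatten [seq [seq (q.1, q.2, p.2) | q <- Delta p.1] | p <- Delta a])
         (flatten [seq [seq (p.1, q.1, q.2) | q <- Delta p.2] | p <- Delta a]).

Definition counital : Prop :=
  forall a : A,
    \sum_(p <- Delta a) eps p.1 *: p.2 = a /\
    \sum_(p <- Delta a) eps p.2 *: p.1 = a.

Definition infinitesimal_compat : Prop :=
  forall a b : A,
    teq2 (Delta (a * b))
         ([seq (p.1, p.2 * b) | p <- Delta a] ++
          [seq (a * p.1, p.2) | p <- Delta b] ++ [:: (- a, b)]).

Definition inf_bialgebra : Prop :=
  [/\ coprod_linear, coassociative, counital & infinitesimal_compat].

Definition conv (f g : A -> A) (a : A) : A :=
  \sum_(p <- Delta a) f p.1 * g p.2.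

Definition is_antipode (S : A -> A) : Prop :=
  forall a : A, conv S id a = eps a *: 1 /\ conv id S a = eps a *: 1.

Definition primitive (x : A) : Prop :=
  teq2 (Delta x) [:: (x, 1); (1, x)].

End InfHopf.

(* Main.v *)
Require Import Defs.
From HB Require Import structures.
From mathcomp Require Import all_boot all_order all_algebra.
Import GRing.Theory.
Local Open Scope ring_scope.

Lemma lin_props (K : fieldType) (U V : lmodType K) (f : U -> V) :
  (forall c x y, f (c *: x + y) = c *: f x + f y) ->
  [/\ f 0 = 0, forall x y, f (x + y) = f x + f y, forall c x, f (c *: x) = c *: f x,
      forall x, f (- x) = - f x &
      forall (I : Type) (r : seq I) (F : I -> U), f (\sum_(i <- r) F i) = \sum_(i <- r) f (F i)].
Proof.
move=> hf.
have f0 : f 0 = 0.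
  have := hf 1 0 0; rewrite !scale1r addr0 => h.
  by apply/esym/(addrI (f 0)); rewrite addr0 -h.
have fD : forall x y, f (x + y) = f x + f y by move=> x y; have := hf 1 x y; rewrite !scale1r.
have fZ : forall c x, f (c *: x) = c *: f x by move=> c x; rewrite -[_ *: x]addr0 hf f0 addr0.
split => //.
- by move=> x; rewrite -scaleN1r fZ scaleN1r.
- move=> I r F; elim: r => [|i r IH]; first by rewrite !big_nil.
  by rewrite !big_cons fD IH.
Qed.

Lemma bilinL (K : fieldType) (A : lmodType K) (V : lmodType K) (B : A -> A -> V) z :
  bilin B -> forall c x y, B (c *: x + y) z = c *: B x z + B y z.
Proof. by case=> h _ c x y; apply h. Qed.
Lemma bilinR (K : fieldType) (A : lmodType K) (V : lmodType K) (B : A -> A -> V) z :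
  bilin B -> forall c x y, B z (c *: x + y) = c *: B z x + B z y.
Proof. by case=> _ h c x y; apply h. Qed.

Lemma coassoc_sum (K : fieldType) (A : algType K) (Delta : A -> seq (A * A)) :
  coassociative Delta -> forall (V : lmodType K) (T : A -> A -> A -> V), trilin T ->
  forall a, \sum_(p <- Delta a) \sum_(q <- Delta p.1) T q.1 q.2 p.2 =
            \sum_(p <- Delta a) \sum_(q <- Delta p.2) T p.1 q.1 q.2.
Proof.
move=> hC V T hT a; have := hC a V T hT.
rewrite !big_flatten /= !big_map.
under eq_bigr do rewrite big_map.
under [in X in _ = X -> _]eq_bigr do rewrite big_map.
by [].
Qed.

Section BL.
Context (K : fieldType) (A : lmodType K) (V : lmodType K) (B : A -> A -> V) (hB : bilin B).
Lemma BsumL I (r : seq I) F z : B (\sum_(i <- r) F i) z = \sum_(i <- r) B (F i) z.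
Proof. by have [_ _ _ _ h] := @lin_props _ _ _ _ (@bilinL _ _ _ B z hB); apply h. Qed.
Lemma BsumR I (r : seq I) F z : B z (\sum_(i <- r) F i) = \sum_(i <- r) B z (F i).
Proof. by have [_ _ _ _ h] := @lin_props _ _ _ _ (@bilinR _ _ _ B z hB); apply h. Qed.
Lemma BZL c x z : B (c *: x) z = c *: B x z.
Proof. by have [_ _ h _ _] := @lin_props _ _ _ _ (@bilinL _ _ _ B z hB); apply h. Qed.
Lemma BZR c x z : B z (c *: x) = c *: B z x.
Proof. by have [_ _ h _ _] := @lin_props _ _ _ _ (@bilinR _ _ _ B z hB); apply h. Qed.
Lemma BNL x z : B (- x) z = - B x z.
Proof. by have [_ _ _ h _] := @lin_props _ _ _ _ (@bilinL _ _ _ B z hB); apply h. Qed.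
Lemma BNR x z : B z (- x) = - B z x.
Proof. by have [_ _ _ h _] := @lin_props _ _ _ _ (@bilinR _ _ _ B z hB); apply h. Qed.
End BL.
Arguments BsumL {K A V B} hB {I} r F z.
Arguments BsumR {K A V B} hB {I} r F z.
Arguments BZL {K A V B} hB c x z.
Arguments BZR {K A V B} hB c x z.
Arguments BNL {K A V B} hB x z.
Arguments BNR {K A V B} hB x z.

Lemma L_lin (K : fieldType) (A : algType K) (V : lmodType K) (Delta : A -> seq (A * A))
  (B : A -> A -> V) :
  coprod_linear Delta -> bilin B -> forall c x y,
  \sum_(p <- Delta (c *: x + y)) B p.1 p.2 =
  c *: \sum_(p <- Delta x) B p.1 p.2 + \sum_(p <- Delta y) B p.1 p.2.
Proof.
move=> hD hB c x y; rewrite (hD c x y V B hB) big_cat big_map /= scaler_sumr.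
by congr (_ + _); apply eq_bigr => p _; rewrite (BZL hB).
Qed.

Lemma ac4 (V : zmodType) (X e d c : V) : X - (e + d - c) = c + (X - d) - e.
Proof. rewrite !opprD opprK !addrA [c + X]addrC. by rewrite addrAC [X - e + c]addrAC addrAC. Qed.

Lemma eps_mul (K : fieldType) (A : algType K) (Delta : A -> seq (A * A)) (eps : {scalar A}) :
  counital Delta eps -> infinitesimal_compat Delta -> forall a b, eps (a * b) = eps a * eps b.
Proof.
move=> hcu hI a b.
pose B := fun x y : A => (eps x * eps y : K^o).
have hB : bilin B.
  split=> c x y z; rewrite /B linearP /=; first by rewrite mulrDl -mulrA.
  by rewrite mulrDr mulrCA.
have := hI a b _ B hB.
rewrite !big_cat !big_map /= big_cons big_nil /B.
have cnt : forall w, \sum_(p <- Delta w) (eps p.1 * eps p.2 : K^o) = eps w.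
  move=> w; rewrite -{2}[w](proj1 (hcu w)) linear_sum; apply eq_bigr => p _.
  by rewrite linearZ.
have s1 : \sum_(j <- Delta a) (eps j.1 * eps (j.2 * b) : K^o) = eps (a * b).
  rewrite -{2}[a](proj1 (hcu a)) mulr_suml linear_sum; apply eq_bigr => p _.
  by rewrite -scalerAl linearZ.
have s2 : \sum_(j <- Delta b) (eps (a * j.1) * eps j.2 : K^o) = eps (a * b).
  rewrite -{2}[b](proj2 (hcu b)) mulr_sumr linear_sum; apply eq_bigr => p _.
  by rewrite -scalerAr linearZ /= mulrC.
rewrite cnt s1 s2 /= addr0 linearN mulNr => h.
have := h; rewrite -{1}[eps (a*b)]addr0 => /addrI /esym /eqP.
by rewrite subr_eq0 => /eqP.
Qed.

Lemma idS_prod (K : fieldType) (A : algType K) (Delta : A -> seq (A * A)) (eps : {scalar A})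
  (S : {linear A -> A}) :
  counital Delta eps -> infinitesimal_compat Delta -> is_antipode Delta eps S ->
  forall a b, \sum_(p <- Delta a) p.1 * S (p.2 * b) =
     (eps a * eps b) *: 1 - eps b *: a + a * S b.
Proof.
move=> hcu hI hS a b.
pose B := fun x y : A => x * S y.
have hB : bilin B.
  split=> c x y z; rewrite /B; first by rewrite mulrDl -scalerAl.
  by rewrite linearP /= mulrDr scalerAr.
have := hI a b A B hB.
rewrite !big_cat !big_map /= big_cons big_nil addr0 /B.
have e1 := proj2 (hS (a * b)); rewrite /conv /= in e1; rewrite e1.
have e2 := proj2 (hS b); rewrite /conv /= in e2.
under [X in _ = _ + (X + _)]eq_bigr do rewrite -mulrA.
rewrite -mulr_sumr e2 -scalerAr mulr1 mulNr (@eps_mul _ _ _ _ hcu hI) => h.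
by rewrite h /= addrA addrAC addrK subrK.
Qed.


Lemma S_prod (K : fieldType) (A : algType K) (Delta : A -> seq (A * A)) (eps : {scalar A})
  (S : {linear A -> A}) :
  coassociative Delta -> counital Delta eps -> infinitesimal_compat Delta -> is_antipode Delta eps S ->
  forall a b, S (a * b) = eps a *: S b + eps b *: S a - (eps a * eps b) *: 1.
Proof.
move=> hC hcu hI hS a b.
have e0 : a * b = \sum_(p <- Delta a) eps p.1 *: (p.2 * b).
  by rewrite -{1}[a](proj1 (hcu a)) mulr_suml; apply eq_bigr => p _; rewrite scalerAl.
rewrite e0 linear_sum /=.
transitivity (\sum_(p <- Delta a) \sum_(q <- Delta p.1) S q.1 * q.2 * S (p.2 * b)).
  apply eq_bigr => p _; rewrite linearZ /= -mulr_suml.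
  by have := proj1 (hS p.1); rewrite /conv /= => ->; rewrite -scalerAl mul1r.
pose T := fun x y z : A => S x * y * S (z * b).
have hT : trilin T.
  rewrite /T; split; [|split] => c x y z w.
  - by rewrite linearP /= !mulrDl -!scalerAl.
  - by rewrite mulrDr mulrDl -scalerAr -scalerAl.
  - by rewrite mulrDl -scalerAl linearP /= mulrDr scalerAr.
rewrite (@coassoc_sum _ _ _ hC _ T hT a) /T.
transitivity (\sum_(p <- Delta a) S p.1 * ((eps p.2 * eps b) *: 1 - eps b *: p.2 + p.2 * S b)).
  apply eq_bigr => p _; rewrite -(@idS_prod _ _ _ _ _ hcu hI hS) mulr_sumr.
  by apply eq_bigr => q _; rewrite mulrA.
under eq_bigr do rewrite mulrDr mulrBr -!scalerAr mulr1 mulrA [eps _ * eps b]mulrC -scalerA.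
rewrite !big_split /= sumrN -!scaler_sumr -mulr_suml.
have e1 := proj1 (hS a); rewrite /conv /= in e1; rewrite e1.
have e2 : \sum_(p <- Delta a) eps p.2 *: S p.1 = S a.
  by rewrite -{2}[a](proj2 (hcu a)) linear_sum; apply eq_bigr => p _; rewrite linearZ.
rewrite e2 -scalerAl mul1r scalerA [eps b * _]mulrC.
by rewrite addrC addrA.
Qed.

Lemma DeltaS (K : fieldType) (A : algType K) (Delta : A -> seq (A * A)) (eps : {scalar A})
  (S : {linear A -> A}) :
  coprod_linear Delta -> coassociative Delta -> counital Delta eps ->
  infinitesimal_compat Delta -> is_antipode Delta eps S ->
  forall a (V : lmodType K) (B : A -> A -> V), bilin B ->
  \sum_(p <- Delta (S a)) B p.1 p.2 = B (S a) 1 + B 1 (S a) - B 1 (eps a *: 1).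
Proof.
move=> hD hC hcu hI hS a V B hB.
set L := fun w => \sum_(p <- Delta w) B p.1 p.2.
have [L0 LD LZ LN Lsum] := @lin_props _ _ _ L (@L_lin _ _ _ _ _ hD hB).
have cSi : forall x, \sum_(q <- Delta x) S q.1 * q.2 = eps x *: 1.
  by move=> x; have := proj1 (hS x); rewrite /conv.
have ciS : forall x, \sum_(q <- Delta x) q.1 * S q.2 = eps x *: 1.
  by move=> x; have := proj2 (hS x); rewrite /conv.
have c1 : forall x, \sum_(q <- Delta x) eps q.1 *: q.2 = x by move=> x; apply (proj1 (hcu x)).
have c2 : forall x, \sum_(q <- Delta x) eps q.2 *: q.1 = x by move=> x; apply (proj2 (hcu x)).
have Lmul : forall x w, L (x * w) = \sum_(r <- Delta x) B r.1 (r.2 * w) +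
     (\sum_(r <- Delta w) B (x * r.1) r.2 + B (- x) w).
  by move=> x w; rewrite /L (hI x w V B hB) !big_cat !big_map /= big_cons big_nil addr0.
have eSa : S a = \sum_(p <- Delta a) \sum_(q <- Delta p.1) S q.1 * (q.2 * S p.2).
  symmetry; transitivity (\sum_(p <- Delta a) eps p.1 *: S p.2).
    apply eq_bigr => p _; under eq_bigr do rewrite mulrA.
    by rewrite -mulr_suml cSi -scalerAl mul1r.
  by rewrite -{2}[a]c1 linear_sum; apply eq_bigr => p _; rewrite linearZ.
have key : L (S a) = \sum_(p <- Delta a) \sum_(q <- Delta p.1)
   (\sum_(r <- Delta (S q.1)) B r.1 (r.2 * (q.2 * S p.2))) +
   \sum_(p <- Delta a) \sum_(q <- Delta p.1)
   (\sum_(r <- Delta (q.2 * S p.2)) B (S q.1 * r.1) r.2) +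
   \sum_(p <- Delta a) \sum_(q <- Delta p.1) B (- S q.1) (q.2 * S p.2).
  rewrite {1}eSa Lsum; under eq_bigr do rewrite Lsum.
  rewrite -!big_split /=; apply eq_bigr => p _.
  rewrite -!big_split /=; apply eq_bigr => q _.
  by rewrite Lmul addrA.
have bR := @bilinR _ _ _ _ _ hB.
have bL := @bilinL _ _ _ _ _ hB.
have F1 : \sum_(p <- Delta a) \sum_(q <- Delta p.1)
   (\sum_(r <- Delta (S q.1)) B r.1 (r.2 * (q.2 * S p.2))) = L (S a).
  pose T1 := fun x y z : A => \sum_(r <- Delta (S x)) B r.1 (r.2 * (y * S z)).
  have hT1 : trilin T1.
    rewrite /T1; split; [|split] => c x y z w.
    - have hB' : bilin (fun u v : A => B u (v * (z * S w))).
        split => c' x' y' z'; first by rewrite bL.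
        by rewrite mulrDl -scalerAl bR.
      by rewrite linearP (@L_lin _ _ _ _ _ hD hB').
    - under eq_bigr do rewrite mulrDl -scalerAl mulrDr -scalerAr bR.
      by rewrite big_split scaler_sumr.
    - under eq_bigr do rewrite linearP mulrDr -scalerAr mulrDr -scalerAr bR.
      by rewrite big_split scaler_sumr.
  rewrite (@coassoc_sum _ _ _ hC _ T1 hT1 a) /T1.
  transitivity (\sum_(p <- Delta a) eps p.2 *: L (S p.1)).
    apply eq_bigr => p _; rewrite exchange_big /= /L scaler_sumr; apply eq_bigr => r _.
    by rewrite -(BsumR hB) -mulr_sumr ciS -scalerAr mulr1 (BZR hB).
  by rewrite -{2}[a]c2 linear_sum Lsum; apply eq_bigr => p _; rewrite linearZ LZ.
have Lmul' : forall x y w, \sum_(r <- Delta (y * w)) B (x * r.1) r.2 =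
    \sum_(s <- Delta y) B (x * s.1) (s.2 * w) +
    (\sum_(t <- Delta w) B (x * (y * t.1)) t.2 + B (x * - y) w).
  move=> x y w.
  have hBx : bilin (fun u v : A => B (x * u) v).
    split => c u u' v; first by rewrite mulrDr -scalerAr bL.
    by rewrite bR.
  by rewrite (hI y w V _ hBx) !big_cat !big_map /= big_cons big_nil addr0.
have FA : \sum_(p <- Delta a) \sum_(q <- Delta p.1) \sum_(s <- Delta q.2)
     B (S q.1 * s.1) (s.2 * S p.2) = B 1 (eps a *: 1).
  transitivity (\sum_(p <- Delta a) B 1 (p.1 * S p.2)); last first.
    by rewrite -(BsumR hB) ciS.
  apply eq_bigr => p _.
  pose T := fun x y z : A => B (S x * y) (z * S p.2).
  have hT : trilin T.
    rewrite /T; split; [|split] => c x y z w.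
    - by rewrite linearP mulrDl -scalerAl bL.
    - by rewrite mulrDr -scalerAr bL.
    - by rewrite mulrDl -scalerAl bR.
  rewrite -(@coassoc_sum _ _ _ hC _ T hT p.1) /T.
  under eq_bigr do rewrite -(BsumL hB) cSi (BZL hB) -(BZR hB) scalerAl.
  by rewrite -(BsumR hB) -mulr_suml c1.
have FB : \sum_(p <- Delta a) \sum_(q <- Delta p.1) \sum_(t <- Delta (S p.2))
     B (S q.1 * (q.2 * t.1)) t.2 = L (S a).
  transitivity (\sum_(p <- Delta a) eps p.1 *: L (S p.2)).
    apply eq_bigr => p _; rewrite exchange_big /= /L scaler_sumr; apply eq_bigr => t _.
    under eq_bigr do rewrite mulrA.
    by rewrite -(BsumL hB) -mulr_suml cSi -scalerAl mul1r (BZL hB).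
  by rewrite -{2}[a]c1 linear_sum Lsum; apply eq_bigr => p _; rewrite linearZ LZ.
have FC : \sum_(p <- Delta a) \sum_(q <- Delta p.1) B (S q.1 * - q.2) (S p.2)
     = - B 1 (S a).
  transitivity (\sum_(p <- Delta a) - (eps p.1 *: B 1 (S p.2))).
    apply eq_bigr => p _; under eq_bigr do rewrite mulrN (BNL hB).
    by rewrite sumrN -(BsumL hB) cSi (BZL hB).
  rewrite sumrN; congr (- _).
  by rewrite -{2}[a]c1 linear_sum (BsumR hB); apply eq_bigr => p _; rewrite linearZ (BZR hB).
have FD : \sum_(p <- Delta a) \sum_(q <- Delta p.1) B (- S q.1) (q.2 * S p.2)
     = - B (S a) 1.
  pose T := fun x y z : A => B (- S x) (y * S z).
  have hT : trilin T.
    rewrite /T; split; [|split] => c x y z w.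
    - by rewrite linearP opprD -scalerN bL.
    - by rewrite mulrDl -scalerAl bR.
    - by rewrite linearP mulrDr -scalerAr bR.
  rewrite (@coassoc_sum _ _ _ hC _ T hT a) /T.
  transitivity (\sum_(p <- Delta a) - (eps p.2 *: B (S p.1) 1)).
    apply eq_bigr => p _.
    by rewrite -(BsumR hB) ciS (BZR hB) (BNL hB) scalerN.
  rewrite sumrN; congr (- _).
  by rewrite -{2}[a]c2 linear_sum (BsumL hB); apply eq_bigr => p _; rewrite linearZ (BZL hB).
have FE : \sum_(p <- Delta a) \sum_(q <- Delta p.1)
   (\sum_(r <- Delta (q.2 * S p.2)) B (S q.1 * r.1) r.2) =
   B 1 (eps a *: 1) + (L (S a) + - B 1 (S a)).
  rewrite -FA -FB -FC -!big_split; apply eq_bigr => p _.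
  rewrite -!big_split; apply eq_bigr => q _; exact: Lmul'.
rewrite F1 FE FD in key.
change (L (S a) = B (S a) 1 + B 1 (S a) - B 1 (eps a *: 1)).
set X := L (S a) in key *.
have h0 : B 1 (eps a *: 1) + (X + - B 1 (S a)) + - B (S a) 1 = 0.
  by apply/(addrI X); rewrite addr0 [RHS]key !addrA.
by apply/eqP; rewrite -subr_eq0 -h0 ac4.
Qed.

Theorem lemma4 (K : fieldType) (A : algType K)
  (Delta : A -> seq (A * A)) (eps : {scalar A}) (S : {linear A -> A}) :
  inf_bialgebra Delta eps -> is_antipode Delta eps S ->
  ((forall a b : A,
      S (a * b) = eps a *: S b + eps b *: S a - (eps a * eps b) *: 1) /\
   (forall a b : A, eps a = 0 -> eps b = 0 -> S (a * b) = 0)) /\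
  ((forall a : A,
      teq2 (Delta (S a)) [:: (S a, 1); (1, S a); (- (eps a) *: 1, 1)]) /\
   (forall a : A, eps a = 0 -> primitive Delta (S a))).
Proof.
move=> [hD hC hcu hI] hS.
have SP := @S_prod _ _ _ _ _ hC hcu hI hS.
have DS := @DeltaS _ _ _ _ _ hD hC hcu hI hS.
split; [split|split].
- exact: SP.
- by move=> a b ea eb; rewrite SP ea eb !scale0r mul0r scale0r !addr0 subr0.
- move=> a V B hB; rewrite DS // !big_cons big_nil /= addr0.
  by rewrite (BZL hB) (BZR hB) scaleNr addrA.
- move=> a ea V B hB; rewrite DS // !big_cons big_nil /= addr0.
  by rewrite (BZR hB) ea scale0r subr0.
Qed.
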